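(* Let $\pi$ be a set of primes, $G$ a group and $G_0$ a subgroup of finite index in $G$. Let $A$ be a $\mathbb ZG$-module that is a $\mathbb ZG_0$-module quotient of some $\mathbb ZG_0$-module whose underlying abelian group is torsion-free of finite rank and $\pi$-spectral. Then $A$ is a $\mathbb ZG$-module quotient of some $\mathbb ZG$-module whose underlying abelian group is torsion-free of finite rank and $\pi$-spectral.
   Context: An abelian group has finite rank if its torsion-free rank and all $p$-ranks are finite; it is $\pi$-spectral if every prime $p$ for which it has a section isomorphic to $\mathbb Z_{p^\infty}$ lies in $\pi$. *)

(* Defs.v *)
From HB Require Import structures.
From mathcomp Require Import all_boot all_order all_algebra.
Set Implicit Arguments. Unset Strict Implicit. Unset Printing Implicit Defensive.
Import Order.TTheory GRing.Theory Num.Theory.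

Section GroupDefs.
Variable G : groupType.
Local Open Scope group_scope.

Definition is_subgroup (H : {pred G}) : Prop := group_closed H.

(* H has finite index in G: finitely many left cosets t H cover G *)
Definition finite_index (H : {pred G}) : Prop :=
  exists s : seq G, forall g : G, exists2 t, t \in s & t^-1 * g \in H.

(* act : G -> M -> M makes the abelian group M a Z H-module, i.e. the
   subgroup H acts on M by additive maps (only the values on H matter). *)
Definition is_action (H : {pred G}) (M : zmodType) (act : G -> M -> M) : Prop :=
  [/\ forall g (x y : M), g \in H -> act g (x + y)%R = (act g x + act g y)%R,
      forall x : M, act 1 x = x
    & forall g h (x : M), g \in H -> h \in H -> act (g * h) x = act g (act h x)].

Definition module_quotient_map (H : {pred G}) (B A : zmodType)
  (actB : G -> B -> B) (actA : G -> A -> A) (f : B -> A) : Prop :=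
  [/\ forall x y : B, f (x + y)%R = (f x + f y)%R,
      forall y : A, exists x : B, f x = y
    & forall g (x : B), g \in H -> f (actB g x) = actA g (f x)].
End GroupDefs.

Local Open Scope ring_scope.

Definition torsion_free (M : zmodType) : Prop :=
  forall (n : nat) (x : M), x *+ n.+1 = 0 -> x = 0.

Definition Z_independent (M : zmodType) (s : seq M) : Prop :=
  forall c : seq int, size c = size s ->
    \sum_(i < size s) s`_i *~ c`_i = 0 -> forall i, c`_i = 0.

Definition finite_tf_rank (M : zmodType) : Prop :=
  exists n : nat, forall s : seq M, Z_independent s -> (size s <= n)%N.

(* p-rank is finite: the F_p-space {x | p x = 0} is finite dimensional *)
Definition finite_p_rank (M : zmodType) (p : nat) : Prop :=
  exists n : nat, forall s : seq M,
    (forall x, x \in s -> x *+ p = 0) ->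
    (forall c : seq nat, size c = size s ->
        \sum_(i < size s) s`_i *+ nth 0%N c i = 0 -> forall i, (p %| nth 0%N c i)%N) ->
    (size s <= n)%N.

Definition finite_rank (M : zmodType) : Prop :=
  finite_tf_rank M /\ forall p, prime p -> finite_p_rank M p.

(* Z_{p^oo} is realised as Z[1/p]/Z, with Z[1/p] inside rat. *)
Definition in_Z1p (p : nat) (q : rat) : Prop := exists k : nat, denq q = (p ^ k)%:Z.
Definition is_intq (q : rat) : Prop := denq q = 1.

(* M has a section H/K (K <= H subgroups of M) isomorphic to Z_{p^oo}:
   f represents (on representatives) an isomorphism H/K -> Z[1/p]/Z. *)
Definition has_prufer_section (M : zmodType) (p : nat) : Prop :=
  exists (H K : {pred M}) (f : M -> rat),
    [/\ zmod_closed H, zmod_closed K & {subset K <= H}] /\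
    [/\ forall x, x \in H -> in_Z1p p (f x),
        forall x y, x \in H -> y \in H -> is_intq (f (x + y) - f x - f y),
        forall x, x \in H -> (is_intq (f x) <-> x \in K)
      & forall q, in_Z1p p q -> exists2 x, x \in H & is_intq (f x - q)].

Definition pi_spectral (pi : pred nat) (M : zmodType) : Prop :=
  forall p, prime p -> has_prufer_section M p -> p \in pi.

(* Main.v *)
Require Import Defs.
From HB Require Import structures.
From mathcomp Require Import all_boot all_order all_algebra.
From mathcomp Require Import ring.
From Stdlib Require Import Classical ClassicalEpsilon.
Set Implicit Arguments. Unset Strict Implicit. Unset Printing Implicit Defensive.
Import Order.TTheory GRing.Theory Num.Theory.

Section Transv.
Variable G : groupType.
Variable G0 : {pred G}.
Hypothesis hG0 : is_subgroup G0.
Local Open Scope group_scope.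

Lemma mysg1 : 1 \in G0. Proof. by case: hG0. Qed.
Lemma mysgV x : x \in G0 -> x^-1 \in G0.
Proof. exact: (group_closedV hG0). Qed.
Lemma mysgM x y : x \in G0 -> y \in G0 -> x * y \in G0.
Proof. exact: (group_closedM hG0). Qed.

Definition eqv (t u : G) := t^-1 * u \in G0.
Lemma eqv_refl t : eqv t t. Proof. by rewrite /eqv mulVg mysg1. Qed.
Lemma eqv_sym t u : eqv t u -> eqv u t.
Proof. by move=> /mysgV; rewrite /eqv invgM invgK. Qed.
Lemma eqv_trans t u v : eqv t u -> eqv u v -> eqv t v.
Proof. by move=> h1 h2; have := mysgM h1 h2; rewrite /eqv mulgA mulgK. Qed.

Lemma mytransversal : finite_index G0 ->
  exists (J : finType) (T : J -> G) (idx : G -> J),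
   (forall g, (T (idx g))^-1 * g \in G0) /\
   (forall g j, (T j)^-1 * g \in G0 -> j = idx g).
Proof.
move=> [s hs].
pose idx0 (g : G) := find (fun t => t^-1 * g \in G0) s.
have idx0E a b : eqv a b -> idx0 a = idx0 b.
  move=> hab; apply: eq_find => t /=.
  apply/idP/idP => h; first exact: (eqv_trans h hab).
  exact: (eqv_trans h (eqv_sym hab)).
have has0 g : has (fun t => t^-1 * g \in G0) s.
  by have [t ts ht] := hs g; apply/hasP; exists t.
have lt0 g : idx0 g < size s by rewrite -has_find.
have nth0 g : eqv (nth 1 s (idx0 g)) g by exact: (nth_find 1 (has0 g)).
pose good (i : 'I_(size s)) := idx0 (nth 1 s i) == i.
exists {i : 'I_(size s) | good i}.
exists (fun j => nth 1 s (val (val j))).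
have gd g : good (Ordinal (lt0 g)) by rewrite /good /= (idx0E _ _ (nth0 g)).
exists (fun g => exist _ (Ordinal (lt0 g)) (gd g)).
split; first by move=> g; exact: nth0.
move=> g [[j jl] gj] /= h; apply: val_inj; apply: val_inj => /=.
rewrite -(idx0E _ _ h); exact/esym/eqP.
Qed.
End Transv.

Local Open Scope ring_scope.

Section Addit.
Variables (M N : zmodType) (h : M -> N).
Hypothesis hD : forall x y, h (x + y) = h x + h y.
Lemma add_0 : h 0 = 0.
Proof. by apply: (@addrI _ (h 0)); rewrite -hD !addr0. Qed.
Lemma add_N x : h (- x) = - h x.
Proof. by apply: (@addrI _ (h x)); rewrite -hD !subrr add_0. Qed.
Lemma add_B x y : h (x - y) = h x - h y.
Proof. by rewrite hD add_N. Qed.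
Lemma add_Mn x n : h (x *+ n) = h x *+ n.
Proof. by elim: n => [|n IH]; rewrite ?mulr0n ?add_0 // !mulrS hD IH. Qed.
Lemma add_Mz x z : h (x *~ z) = h x *~ z.
Proof.
case: z => n; first by rewrite -!pmulrn add_Mn.
by rewrite NegzE !mulrNz add_N -!pmulrn add_Mn.
Qed.
Lemma add_sum (I : Type) (r : seq I) (P : pred I) (F : I -> M) :
  h (\sum_(i <- r | P i) F i) = \sum_(i <- r | P i) h (F i).
Proof. exact: (big_morph h hD add_0). Qed.
End Addit.

Definition indepN (M : zmodType) (k : nat) (v : nat -> M) :=
  forall c : nat -> int, \sum_(i < k) v i *~ c i = 0 -> forall i, (i < k)%N -> c i = 0.
Definition rk (M : zmodType) (n : nat) := forall k v, @indepN M k v -> (k <= n)%N.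

Lemma indepN_ext (M : zmodType) k (v w : nat -> M) :
  (forall i, (i < k)%N -> v i = w i) -> indepN k v -> indepN k w.
Proof.
move=> e hv c hc; apply: hv.
rewrite -[RHS]hc; apply: eq_bigr => i _; rewrite e //.
Qed.

Lemma Zind_indepN (M : zmodType) (s : seq M) : Z_independent s <-> indepN (size s) (nth 0 s).
Proof.
split.
- move=> hs c hc i hi.
  have := hs (mkseq c (size s)); rewrite size_mkseq => /(_ erefl).
  have -> : \sum_(i < size s) s`_i *~ (mkseq c (size s))`_i = 0.
    by rewrite -[RHS]hc; apply: eq_bigr => j _; rewrite nth_mkseq.
  by move=> /(_ erefl i); rewrite nth_mkseq.
- move=> hs c hsz hc i; case: (ltnP i (size s)) => hi.
  + exact: hs hc i hi.
  + by rewrite nth_default // hsz.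
Qed.

Lemma tf_rank_rk (M : zmodType) : finite_tf_rank M <-> exists n, rk M n.
Proof.
split => -[n hn]; exists n.
- move=> k v hv; have := hn (mkseq v k); rewrite size_mkseq; apply.
  apply/Zind_indepN; rewrite size_mkseq; apply: indepN_ext hv.
  by move=> i hi; rewrite nth_mkseq.
- by move=> s /Zind_indepN /hn.
Qed.

Lemma dep (M : zmodType) n k (v : nat -> M) : rk M n -> (n < k)%N ->
  exists c : nat -> int, \sum_(i < k) v i *~ c i = 0 /\ exists i, (i < k)%N /\ c i <> 0.
Proof.
move=> hr hk; have nI : ~ indepN k v.
  by move=> /hr; rewrite leqNgt hk.
apply: NNPP => hn; apply: nI => c hc i hi; apply: NNPP => ci.
by apply: hn; exists c; split => //; exists i.
Qed.

Definition ext (i0 : nat) (d : nat -> int) (i : nat) : int :=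
  if i == i0 then 0 else d (unbump i0 i).

Lemma ext_bump i0 d i : ext i0 d (bump i0 i) = d i.
Proof. by rewrite /ext eq_sym (negbTE (neq_bump _ _)) bumpK. Qed.

Lemma sum_ext (N : zmodType) k (y : nat -> N) (i0 : nat) d : (i0 < k.+1)%N ->
  \sum_(i < k.+1) y i *~ ext i0 d i = \sum_(i < k) y (bump i0 i) *~ d i.
Proof.
move=> hi0; rewrite (bigD1_ord (Ordinal hi0)) //= /ext eqxx mulr0z add0r.
apply: eq_bigr => i _ /=; rewrite /bump.
by have := ext_bump i0 d i; rewrite /ext /bump => ->.
Qed.

Lemma rel_lemma (N : zmodType) n : rk N n -> forall k (y : nat -> N),
  exists r (cs : nat -> nat -> int) (ps : nat -> nat),
   [/\ (k - n <= r)%N,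
       forall j, (j < r)%N -> \sum_(i < k) y i *~ cs j i = 0,
       forall j, (j < r)%N -> (ps j < k)%N,
       forall j, (j < r)%N -> cs j (ps j) <> 0
     & forall j l, (l < j)%N -> (j < r)%N -> cs j (ps l) = 0].
Proof.
move=> hr; elim=> [|k IH] y.
  by exists 0%N, (fun _ _ => 0), (fun _ => 0%N); split.
case: (leqP k.+1 n) => hkn.
  by exists 0%N, (fun _ _ => 0), (fun _ => 0%N); split; rewrite // leqn0 subn_eq0.
have [c [hc [i0 [hi0 ci0]]]] := dep y hr hkn.
have [r [cs [ps [h1 h2 h3 h4 h5]]]] := IH (fun i => y (bump i0 i)).
exists r.+1, (fun j => if j is j'.+1 then ext i0 (cs j') else c),
  (fun j => if j is j'.+1 then bump i0 (ps j') else i0).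
split.
- by rewrite subSn; [exact: h1 | exact: hkn].
- by case=> [|j] //= hj; rewrite sum_ext //; apply: h2.
- case=> [|j] //= hj; have := h3 _ hj; rewrite /bump.
  by case: (i0 <= ps j)%N; rewrite ?addn1 ?addn0 // => /ltnW.
- by case=> [|j] //= hj; rewrite ext_bump; apply: h4.
- case=> [|j] [|l] //= hlj hj.
  + by rewrite /ext eqxx.
  + by rewrite ext_bump; apply: h5.
Qed.

Lemma tri_lemma r (cs : nat -> nat -> int) (ps : nat -> nat) (d : nat -> int) :
  (forall j, (j < r)%N -> cs j (ps j) <> 0) ->
  (forall j l, (l < j)%N -> (j < r)%N -> cs j (ps l) = 0) ->
  (forall j, (j < r)%N -> \sum_(l < r) d l * cs l (ps j) = 0) ->
  forall j, (j < r)%N -> d j = 0.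
Proof.
move=> h4 h5 hs.
suff H t : forall j, (j < t)%N -> (j < r)%N -> d j = 0.
  by move=> j hj; apply: (H j.+1).
elim: t => [|t IH] j //; rewrite ltnS leq_eqVlt => /orP [/eqP -> | hjt] hjr; last first.
  exact: IH.
have := hs t hjr; rewrite (bigD1 (Ordinal hjr)) //= big1 ?addr0.
  by move/eqP; rewrite mulf_eq0 => /orP [/eqP //| /eqP /(h4 _ hjr)].
move=> l hl; case: (ltngtP l t) => hlt.
- by rewrite IH // mul0r.
- by rewrite h5 // mulr0.
- by move: hl; rewrite -val_eqE /= hlt eqxx.
Qed.

Lemma rk_prod (M N : zmodType) m n : rk M m -> rk N n -> rk (M * N)%type (m + n).
Proof.
move=> hM hN k v hv; rewrite leqNgt; apply/negP => hk.
have [r [cs [ps [h1 h2 h3 h4 h5]]]] := rel_lemma hN k (fun i => (v i).2).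
have hrm : (m < r)%N.
  by apply: leq_trans h1; rewrite ltn_subRL addnC.
pose z j := \sum_(i < k) (v i).1 *~ cs j i.
have [d [hd [j0 [hj0 dj0]]]] := dep z hM hrm.
pose e i := \sum_(j < r) d j * cs j i.
have hsum (U : zmodType) (a : nat -> U) :
  \sum_(i < k) a i *~ e i = \sum_(j < r) (\sum_(i < k) a i *~ cs j i) *~ d j.
  rewrite /e; under eq_bigr => i _ do rewrite mulrz_sumr.
  rewrite exchange_big /=; apply: eq_bigr => j _; rewrite mulrz_suml.
  by apply: eq_bigr => i _; rewrite mulrC mulrzA.
have he : \sum_(i < k) v i *~ e i = 0.
  have -> : \sum_(i < k) v i *~ e i =
     ((\sum_(i < k) v i *~ e i).1, (\sum_(i < k) v i *~ e i).2) by case: (\sum_(i < k) v i *~ e i).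
  rewrite !(@add_sum _ _ fst) // !(@add_sum _ _ snd) //.
  under eq_bigr => i _ do rewrite (@add_Mz _ _ fst) //.
  under [X in (_, X)]eq_bigr => i _ do rewrite (@add_Mz _ _ snd) //.
  rewrite (hsum _ (fun i => (v i).1)) (hsum _ (fun i => (v i).2)).
  have -> : (0 : (M * N)%type) = (0, 0) by []. congr pair; first exact: hd.
  by apply: big1 => j _; rewrite h2 // mul0rz.
apply: dj0; apply: (tri_lemma h4 h5) hj0.
move=> j hj; exact: (hv e he (ps j) (h3 _ hj)).
Qed.

Lemma rk_inj (M N : zmodType) (phi : M -> N) n :
  (forall x y, phi (x + y) = phi x + phi y) -> injective phi -> rk N n -> rk M n.
Proof.
move=> hD hI hr k v hv; apply: (hr k (fun i => phi (v i))) => c hc; apply: hv; apply: hI.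
by rewrite (add_sum hD) (add_0 hD) -[RHS]hc; apply: eq_bigr => i _; rewrite (add_Mz hD).
Qed.

Lemma rk_ffun_ord (B : zmodType) m : rk B m -> forall n, rk {ffun 'I_n -> B} (n * m).
Proof.
move=> hB; elim=> [|n IH].
  move=> k v hv; rewrite mul0n leqn0; apply/negP => /negP hk.
  have k0 : (0 < k)%N by rewrite lt0n.
  suff : (1 : int) = 0 by [].
  apply: (hv (fun _ => 1)) k0.
  apply: big1 => i _; have -> : v i = 0 by apply/ffunP => -[].
  by rewrite mul0rz.
rewrite mulSn.
pose phi (x : {ffun 'I_n.+1 -> B}) := (x ord0, [ffun i : 'I_n => x (lift ord0 i)] : {ffun 'I_n -> B}).
apply: (@rk_inj _ _ phi); last exact: rk_prod.
- move=> x y; rewrite /phi !ffunE; congr pair; apply/ffunP => i; rewrite !ffunE //.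
- move=> x y [h0 h1]; apply/ffunP => i; case: (unliftP ord0 i) => [j ->|->] //.
  by have := congr1 (fun f : {ffun 'I_n -> B} => f j) h1; rewrite !ffunE.
Qed.

Lemma rk_ffun (J : finType) (B : zmodType) m : rk B m -> rk {ffun J -> B} (#|J| * m).
Proof.
move=> hB; pose phi (x : {ffun J -> B}) := [ffun k => x (enum_val k)] : {ffun 'I_#|J| -> B}.
apply: (@rk_inj _ _ phi); last exact: rk_ffun_ord.
- by move=> x y; apply/ffunP => i; rewrite !ffunE.
- move=> x y h; apply/ffunP => j.
  by have := congr1 (fun f : {ffun 'I_#|J| -> B} => f (enum_rank j)) h; rewrite !ffunE enum_rankK.
Qed.

Lemma tf_ffun (J : finType) (B : zmodType) : torsion_free B -> torsion_free {ffun J -> B}.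
Proof.
move=> hB n x hx; apply/ffunP => j; rewrite ffunE; apply: (hB n).
by rewrite -ffunMnE hx ffunE.
Qed.

Lemma prank_tf (M : zmodType) p : torsion_free M -> prime p -> finite_p_rank M p.
Proof.
move=> hM hp; exists 0%N => s hs hc; rewrite leqn0; apply/negP => /negP hs0.
have z i : s`_i = 0.
  case: (ltnP i (size s)) => hi; last by rewrite nth_default.
  have [q hq] : exists q, p = q.+1 by case: (p) hp => // q _; exists q.
  by have := hs _ (mem_nth 0 hi); rewrite hq => /hM.
have := hc (nseq (size s) 1%N); rewrite size_nseq => /(_ erefl).
rewrite big1 => [/(_ erefl 0%N)|i _]; last by rewrite z mul0rn.
rewrite nth_nseq lt0n hs0 dvdn1 => /eqP hp1; by rewrite hp1 in hp.
Qed.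

Lemma frank_ffun (J : finType) (B : zmodType) : torsion_free B -> finite_rank B ->
  finite_rank {ffun J -> B}.
Proof.
move=> tB [hB _]; split; last by move=> p hp; apply: prank_tf => //; apply: tf_ffun.
have [m hm] := (tf_rank_rk B).1 hB; apply/tf_rank_rk; exists (#|J| * m)%N.
exact: rk_ffun.
Qed.

Lemma intqE q : is_intq q <-> q \is a Num.int.
Proof. by rewrite Qint_def; split => /eqP. Qed.

Lemma Zp_char p q : prime p ->
  in_Z1p p q <-> exists k, q * (p%:R : rat) ^+ k \is a Num.int.
Proof.
move=> hp; split.
- move=> [k hk]; exists k; rewrite -natrX.
  have -> : ((p ^ k)%:R : rat) = (denq q)%:~R by rewrite hk.
  by rewrite -numqE intr_int.
- move=> [k /intrP [z hz]].
  have e : (numq q * (p ^ k)%:Z = z * denq q)%R.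
    apply: (@intr_inj rat); rewrite !intrM -hz numqE.
    have -> : ((p ^ k)%:Z%:~R : rat) = (p%:R) ^+ k by rewrite -natrX.
    ring.
  have e2 := congr1 absz e; rewrite !abszM /= in e2.
  have hd : (`|denq q| %| p ^ k)%N.
    have cp : coprime `|denq q| `|numq q| by rewrite coprime_sym coprime_num_den.
    by rewrite -(Gauss_dvdr _ cp) e2 dvdn_mull.
  have [j _ hj] := dvdn_pfactor _ _ hp hd.
  by exists j; rewrite -absz_denq hj.
Qed.

Section ZC.
Variables (M : zmodType) (H : {pred M}).
Hypothesis hH : zmod_closed H.
Lemma zc0 : 0 \in H. Proof. by case: hH. Qed.
Lemma zcB x y : x \in H -> y \in H -> x - y \in H. Proof. by case: hH => _; apply. Qed.
Lemma zcN x : x \in H -> - x \in H.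
Proof. by move=> hx; rewrite -sub0r zcB // zc0. Qed.
Lemma zcD x y : x \in H -> y \in H -> x + y \in H.
Proof. by move=> hx hy; rewrite -[y]opprK zcB // zcN. Qed.
Lemma zcMn x n : x \in H -> x *+ n \in H.
Proof. by move=> hx; elim: n => [|n IH]; rewrite ?mulr0n ?zc0 // mulrS zcD. Qed.
Lemma zcMz x z : x \in H -> x *~ z \in H.
Proof.
move=> hx; case: z => n; [rewrite -pmulrn | rewrite NegzE mulrNz -pmulrn; apply: zcN].
all: exact: zcMn.
Qed.

Variable f : M -> rat.
Hypothesis hD : forall x y, x \in H -> y \in H -> is_intq (f (x + y) - f x - f y).

Lemma fD x y : x \in H -> y \in H -> f (x + y) - f x - f y \is a Num.int.
Proof. by move=> hx hy; apply/intqE/hD. Qed.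
Lemma f0 : f 0 \is a Num.int.
Proof.
have := fD zc0 zc0; rewrite addr0.
have -> : f 0 - f 0 - f 0 = - f 0 by ring.
by rewrite rpredN.
Qed.
Lemma fN x : x \in H -> f (- x) + f x \is a Num.int.
Proof.
move=> hx; have := fD (zcN hx) hx; rewrite addNr => h.
have := rpredB f0 h.
by have -> : f 0 - (f 0 - f (- x) - f x) = f (-x) + f x by ring.
Qed.
Lemma fMn x n : x \in H -> f (x *+ n) - f x * n%:R \is a Num.int.
Proof.
move=> hx; elim: n => [|n IH]; first by rewrite mulr0n mulr0 subr0 f0.
have := rpredD IH (fD (zcMn n hx) hx); rewrite -mulrSr.
by have -> : f (x *+ n) - f x * n%:R + (f (x *+ n.+1) - f (x *+ n) - f x) =
  f (x *+ n.+1) - f x * n.+1%:R by rewrite -natr1; ring.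
Qed.
Lemma fMz x z : x \in H -> f (x *~ z) - f x * z%:~R \is a Num.int.
Proof.
move=> hx; case: z => n; first by rewrite -pmulrn fMn.
rewrite NegzE mulrNz -pmulrn.
have := rpredB (fN (zcMn n.+1 hx)) (fMn n.+1 hx).
move=> h; suff -> : f (x *- n.+1) - f x * (- n.+1%:Z)%:~R =
  f (x *- n.+1) + f (x *+ n.+1) - (f (x *+ n.+1) - f x * n.+1%:R) by [].
by rewrite intrN; ring.
Qed.
End ZC.

Lemma arith1 (X Q A Bt W U Pc Pb : rat) :
  X * Pc * Pb = U -> Q * Pb = W -> A * U + Bt * (Pc * Pb) = 1 ->
  (X * (A * W * Pc) - Q) * Pb = - (Bt * W * Pc) * Pb.
Proof.
move=> e1 e2 e3.
have -> : (X * (A * W * Pc) - Q) * Pb = A * W * (X * Pc * Pb) - Q * Pb by ring.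
rewrite e1 e2.
have -> : - (Bt * W * Pc) * Pb = W * (Bt * (Pc * Pb)) * -1 by ring.
have -> : Bt * (Pc * Pb) = 1 - A * U by rewrite -e3; ring.
ring.
Qed.

Lemma castX p k : (((p ^ k)%N)%:Z%:~R : rat) = (p%:R) ^+ k.
Proof. by rewrite -natrX. Qed.

Lemma full_or_bounded (M : zmodType) (H : {pred M}) (f : M -> rat) p :
  prime p -> zmod_closed H ->
  (forall x y, x \in H -> y \in H -> is_intq (f (x + y) - f x - f y)) ->
  (forall x, x \in H -> in_Z1p p (f x)) ->
  (forall a, exists x, x \in H /\ ~ (f x * p%:R ^+ a \is a Num.int)) ->
  forall q, in_Z1p p q -> exists2 x, x \in H & is_intq (f x - q).
Proof.
move=> hp hH hD hZ hu q /(Zp_char q hp) [b hb].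
have [x [hx hnx]] := hu b.
have [c hc] := hZ x hx.
set u := numq (f x).
have eu : f x * p%:R ^+ c = u%:~R by rewrite numqE hc castX.
have hcb : (b < c)%N.
  rewrite ltnNge; apply/negP => hcb; apply: hnx.
  have -> : f x * p%:R ^+ b = f x * p%:R ^+ c * p%:R ^+ (b - c).
    by rewrite -mulrA -exprD subnKC.
  rewrite eu; apply: rpredM; first exact: intr_int.
  by rewrite rpredX ?natr_int.
have cop : coprimez u (p ^ c)%N.
  by rewrite coprimezE -hc coprime_num_den.
have [[al be] /= hab] := coprimezP _ _ cop.
have [w hw] := intrP hb.
pose z : int := al * w * (p ^ (c - b))%N.
exists (x *~ z); first exact: zcMz.
have h1 := fMz hH hD z hx.
apply/intqE.
have -> : f (x *~ z) - q = (f (x *~ z) - f x * z%:~R) + (f x * z%:~R - q) by ring.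
apply: rpredD => //.
have Pb0 : (p%:R : rat) ^+ b != 0.
  by rewrite expf_neq0 // pnatr_eq0 -lt0n prime_gt0.
have -> : f x * z%:~R - q = - (be%:~R * w%:~R * p%:R ^+ (c - b)).
  apply: (mulIf Pb0); rewrite /z !intrM castX.
  apply: (arith1 (U := u%:~R)); first by rewrite -mulrA -exprD (subnK (ltnW hcb)).
    exact/esym.
  rewrite -exprD (subnK (ltnW hcb)) //.
  have := congr1 (fun t : int => (t%:~R : rat)) hab.
  by rewrite intrD !intrM castX.
by rewrite rpredN !rpredM ?intr_int // rpredX ?natr_int.
Qed.

Lemma ZpMP p q a : prime p -> in_Z1p p q -> in_Z1p p (q * p%:R ^+ a).
Proof.
move=> hp /(Zp_char q hp) [k hk]; apply/(Zp_char _ hp); exists k.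
by rewrite mulrAC rpredM // rpredX ?natr_int.
Qed.

Lemma ZpVP p q a : prime p -> in_Z1p p q -> in_Z1p p (q / p%:R ^+ a).
Proof.
move=> hp /(Zp_char q hp) [k hk]; apply/(Zp_char _ hp); exists (k + a)%N.
have Pa0 : (p%:R : rat) ^+ a != 0 by rewrite expf_neq0 // pnatr_eq0 -lt0n prime_gt0.
by rewrite exprD mulrA [q / _ * _]mulrAC divfK.
Qed.

Lemma not_int_invp p : prime p -> ~ ((p%:R : rat)^-1 \is a Num.int).
Proof.
move=> hp; rewrite Qint_def.
have -> : (p%:R : rat) = (p%:Z)%:~R by [].
rewrite denqVz; last by rewrite -lt0n prime_gt0.
by move=> /eqP [] hp1; rewrite hp1 in hp.
Qed.

Lemma Zp_invp p : prime p -> in_Z1p p (p%:R^-1).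
Proof.
move=> hp; exists 1%N; rewrite expn1.
have -> : (p%:R : rat) = (p%:Z)%:~R by [].
by rewrite denqVz // -lt0n prime_gt0.
Qed.

Lemma section_nontriv (M : zmodType) p : prime p -> has_prufer_section M p ->
  exists x : M, x != 0.
Proof.
move=> hp [H [K [f [[hH hK hKH] [s1 s2 s3 s4]]]]].
have [x hx hxq] := s4 _ (Zp_invp hp).
exists x; apply/negP => /eqP x0; subst x.
have : is_intq (f 0) by apply/(s3 _ hx); exact: (zc0 hK).
move/intqE => h0; move/intqE: hxq => h1.
apply: (not_int_invp hp).
by have := rpredB h0 h1; rewrite opprB addrC subrK.
Qed.

Lemma prufer_transport (M N : zmodType) (phi : M -> N) (psi : N -> M) p :
  (forall x y, psi (x + y) = psi x + psi y) -> (forall x, psi (phi x) = x) ->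
  has_prufer_section M p -> has_prufer_section N p.
Proof.
move=> hD hK [H [K [f [[hH hKK hKH] [s1 s2 s3 s4]]]]].
have p0 : psi 0 = 0 by apply: (@addrI _ (psi 0)); rewrite -hD !addr0.
have pN x : psi (- x) = - psi x.
  by apply: (@addrI _ (psi x)); rewrite -hD !subrr p0.
have pB x y : psi (x - y) = psi x - psi y by rewrite hD pN.
pose H' : {pred N} := [pred y | psi y \in H].
pose K' : {pred N} := [pred y | psi y \in K].
exists H', K', (fun y => f (psi y)).
split; split.
- split; first by rewrite inE p0 (zc0 hH).
  by move=> x y; rewrite !inE pB; apply: zcB.
- split; first by rewrite inE p0 (zc0 hKK).
  by move=> x y; rewrite !inE pB; apply: zcB.
- by move=> x; rewrite !inE; apply: hKH.
- by move=> x; rewrite inE; apply: s1.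
- by move=> x y; rewrite !inE hD; apply: s2.
- by move=> x; rewrite !inE; apply: s3.
- move=> q hq; have [x hx hxq] := s4 q hq.
  by exists (phi x); rewrite ?inE hK.
Qed.

Definition pb (P : Prop) : bool := if excluded_middle_informative P then true else false.
Lemma pbP (P : Prop) : pb P <-> P.
Proof. by rewrite /pb; case: excluded_middle_informative. Qed.

Lemma prufer_prod (M N : zmodType) p : prime p ->
  has_prufer_section (M * N)%type p -> has_prufer_section M p \/ has_prufer_section N p.
Proof.
move=> hp [H [K [f [[hH hK hKH] [s1 s2 s3 s4]]]]].
have pD (a b : M) (c d : N) : (a, c) + (b, d) = (a + b, c + d) by [].
have pB (a b : M) (c d : N) : (a, c) - (b, d) = (a - b, c - d) by [].
have z0 : (0 : (M * N)%type) = (0, 0) by [].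
pose H1 : {pred M} := [pred x : M | (x, 0) \in H].
pose K1 : {pred M} := [pred x : M | (x, 0) \in K].
pose f1 x := f (x, 0).
have hH1 : zmod_closed H1.
  split; first by rewrite inE -z0 (zc0 hH).
  by move=> x y; rewrite !inE => hx hy; have := zcB hH hx hy; rewrite pB subrr.
have hK1 : zmod_closed K1.
  split; first by rewrite inE -z0 (zc0 hK).
  by move=> x y; rewrite !inE => hx hy; have := zcB hK hx hy; rewrite pB subrr.
have hD1 x y : x \in H1 -> y \in H1 -> is_intq (f1 (x + y) - f1 x - f1 y).
  by rewrite !inE => hx hy; have := s2 _ _ hx hy; rewrite pD addr0.
have hZ1 x : x \in H1 -> in_Z1p p (f1 x) by apply: s1.
case: (classic (forall q, in_Z1p p q -> exists2 x, x \in H1 & is_intq (f1 x - q))) => hA.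
  left; exists H1, K1, f1; split; split => //.
  - by move=> x; rewrite !inE; apply: hKH.
  - by move=> x; rewrite inE; apply: s3.
right.
have [a ha] : exists a, forall x, x \in H1 -> f1 x * p%:R ^+ a \is a Num.int.
  apply: NNPP => hn; apply: hA; apply: full_or_bounded => //.
  move=> a; apply: NNPP => hn2; apply: hn; exists a => x hx; apply: NNPP => hx2.
  by apply: hn2; exists x; split.
set P := (p%:R : rat) ^+ a.
have ha' x : x \in H1 -> f1 x * P \is a Num.int by exact: ha.
have Pint : P \is a Num.int by rewrite rpredX ?natr_int.
pose inH2 y := exists x, (x, y) \in H.
pose chi y := epsilon (inhabits (0 : M)) (fun x => (x, y) \in H).
have hchi y : inH2 y -> (chi y, y) \in H by move=> h; exact: (epsilon_spec _ _ h).
pose H2 : {pred N} := [pred y : N | pb (inH2 y)].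
pose f2 y := f (chi y, y) * P.
pose K2 : {pred N} := [pred y : N | pb (inH2 y) && (f2 y \is a Num.int)].
have H2P y : y \in H2 <-> inH2 y by rewrite inE; apply: pbP.
have WD x x' y : (x, y) \in H -> (x', y) \in H -> (f (x, y) - f (x', y)) * P \is a Num.int.
  move=> h h'; have hx : x - x' \in H1 by rewrite inE; have := zcB hH h h'; rewrite pB subrr.
  have := s2 _ _ h' hx; rewrite pD addr0 subrKC => /intqE i1.
  have -> : (f (x, y) - f (x', y)) * P = (f (x, y) - f (x', y) - f1 (x - x')) * P + f1 (x - x') * P.
    by rewrite /f1; ring.
  by apply: rpredD; [apply: rpredM | apply: ha'].
have sD y y' : inH2 y -> inH2 y' -> (chi y + chi y', y + y') \in H.
  by move=> h h'; rewrite -pD zcD // hchi.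
have hH2 : zmod_closed H2.
  split; first by apply/H2P; exists 0; rewrite -z0 (zc0 hH).
  move=> y y' /H2P h /H2P h'; apply/H2P; exists (chi y - chi y').
  by rewrite -pB zcB // hchi.
have hKH2 : {subset K2 <= H2} by move=> y; rewrite !inE => /andP [].
have hK2 : zmod_closed K2.
  split.
    have h0 : inH2 0 by exists 0; rewrite -z0 (zc0 hH).
    rewrite inE; apply/andP; split; first exact/pbP.
    by apply: ha'; rewrite inE; apply: hchi.
  move=> y y'; rewrite !inE => /andP [/pbP h i] /andP [/pbP h' i'].
  have hyy : inH2 (y - y') by exists (chi y - chi y'); rewrite -pB zcB // hchi.
  apply/andP; split; first exact/pbP.
  have hW : (chi y - chi y', y - y') \in H by rewrite -pB zcB // hchi.
  have hs := s2 _ _ hW (hchi _ h'); rewrite pD !subrK in hs.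
  move/intqE: hs => hs.
  have := WD _ _ _ (hchi _ hyy) hW.
  set W := f (chi y - chi y', y - y') => iW.
  have -> : f2 (y - y') = (f (chi (y - y'), y - y') - W) * P + f2 y - f2 y'
      - (f (chi y, y) - W - f (chi y', y')) * P by rewrite /f2; ring.
  by apply: rpredB; [apply: rpredB; [apply: rpredD|] | apply: rpredM].
exists H2, K2, f2; split; split => //.
- move=> y /H2P h; apply: ZpMP => //; exact: s1 (hchi _ h).
- move=> y y' /H2P h /H2P h'.
  have hyy : inH2 (y + y') by exists (chi y + chi y'); exact: sD.
  apply/intqE.
  have -> : f2 (y + y') - f2 y - f2 y' =
     (f (chi (y + y'), y + y') - f (chi y + chi y', y + y')) * P +
     (f (chi y + chi y', y + y') - f (chi y, y) - f (chi y', y')) * P by rewrite /f2; ring.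
  apply: rpredD; first by apply: WD; [apply: hchi | apply: sD].
  apply: rpredM => //.
  by have := s2 _ _ (hchi _ h) (hchi _ h'); rewrite pD => /intqE.
- move=> y /H2P h; rewrite inE; split => [/intqE i|/andP [_ /intqE //]].
  by apply/andP; split; [exact/pbP|].
- move=> q hq.
  have Pa0 : P != 0 by rewrite expf_neq0 // pnatr_eq0 -lt0n prime_gt0.
  have [[x y] hxy hq'] := s4 _ (ZpVP a hp hq).
  have hy : inH2 y by exists x.
  exists y; first exact/H2P.
  apply/intqE; move/intqE: hq' => hq'.
  have -> : f2 y - q = (f (chi y, y) - f (x, y)) * P + (f (x, y) - q / P) * P.
    by rewrite /f2 -/P [(f (x, y) - q / P) * P]mulrBl divfK //; ring.
  by apply: rpredD; [apply: WD => //; apply: hchi | apply: rpredM].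
Qed.

Lemma prufer_ffun_ord (B : zmodType) p : prime p -> forall n,
  has_prufer_section {ffun 'I_n -> B} p -> has_prufer_section B p.
Proof.
move=> hp; elim=> [|n IH] hs.
  have [x /eqP hx] := section_nontriv hp hs; exfalso; apply: hx.
  by apply/ffunP => -[].
pose phi (x : {ffun 'I_n.+1 -> B}) := (x ord0, [ffun i : 'I_n => x (lift ord0 i)] : {ffun 'I_n -> B}).
pose psi (z : (B * {ffun 'I_n -> B})%type) : {ffun 'I_n.+1 -> B} :=
  [ffun i => if unlift ord0 i is Some j then z.2 j else z.1].
have hs' : has_prufer_section (B * {ffun 'I_n -> B})%type p.
  apply: (@prufer_transport _ _ phi psi) hs.
- move=> x y; apply/ffunP => i; rewrite !ffunE.
  by case: (unlift ord0 i) => [j|] //=; rewrite ffunE.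
- move=> x; apply/ffunP => i; rewrite ffunE.
  by case: (unliftP ord0 i) => [j ->|->] //=; rewrite ffunE.
by case: (prufer_prod hp hs') => // /IH.
Qed.

Lemma ffun_props (pi : pred nat) (J : finType) (B : zmodType) :
  torsion_free B -> finite_rank B -> pi_spectral pi B ->
  [/\ torsion_free {ffun J -> B}, finite_rank {ffun J -> B} & pi_spectral pi {ffun J -> B}].
Proof.
move=> tB fB sB; split; [exact: tf_ffun | exact: frank_ffun |].
move=> p hp hs; apply: (sB p hp); apply: (prufer_ffun_ord hp (n := #|J|)).
pose phi (x : {ffun J -> B}) := [ffun k => x (enum_val k)] : {ffun 'I_#|J| -> B}.
pose psi (y : {ffun 'I_#|J| -> B}) := [ffun j => y (enum_rank j)] : {ffun J -> B}.
apply: (@prufer_transport _ _ phi psi) hs.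
- by move=> x y; apply/ffunP => j; rewrite !ffunE.
- by move=> x; apply/ffunP => j; rewrite !ffunE enum_rankK.
Qed.



Lemma add0_act (M : zmodType) (h : M -> M) : (forall x y, h (x + y) = h x + h y) -> h 0 = 0.
Proof. by move=> hh; apply: (@addrI _ (h 0)); rewrite -hh !addr0. Qed.

Lemma add_sum2 (M N : zmodType) (h : M -> N) (I : finType) (F : I -> M) :
  (forall x y, h (x + y) = h x + h y) -> h (\sum_i F i) = \sum_i h (F i).
Proof.
move=> hh; have h0 : h 0 = 0 by apply: (@addrI _ (h 0)); rewrite -hh !addr0.
exact: (big_morph h hh h0).
Qed.

Theorem lemma4p3 (pi : pred nat) (G : groupType) (G0 : {pred G})
  (hG0 : is_subgroup G0) (hfin : finite_index G0)
  (A : zmodType) (actA : G -> A -> A) (hA : is_action predT actA)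
  (hB : exists (B : zmodType) (actB : G -> B -> B),
          [/\ is_action G0 actB, torsion_free B, finite_rank B, pi_spectral pi B
            & exists f : B -> A, module_quotient_map G0 actB actA f]) :
  exists (C : zmodType) (actC : G -> C -> C),
    [/\ is_action predT actC, torsion_free C, finite_rank C, pi_spectral pi C
      & exists f : C -> A, module_quotient_map predT actC actA f].
Proof.
have [J [T [idx [P1 P2]]]] := mytransversal hG0 hfin.
have [B [actB [[aBD aB1 aBM] tfB frB psB [f [fD fS fE]]]]] := hB.
have [aAD aA1 aAM] := hA.
have [tfC frC psC] := ffun_props J tfB frB psB.
have idxT j : idx (T j) = j by apply/esym/P2; rewrite mulVg (mysg1 hG0).
pose w (g : G) (i : J) := ((T i)^-1 * g * T (idx (g^-1 * T i)))%g.
have wG g i : w g i \in G0.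
  by have := mysgV hG0 (P1 (g^-1 * T i)%g); rewrite /w !invgM !invgK.
pose actC (g : G) (phi : {ffun J -> B}) :=
  [ffun i => actB (w g i) (phi (idx (g^-1 * T i)%g))].
exists {ffun J -> B}, actC; split => //.
- split.
  + move=> g x y _; apply/ffunP => i; rewrite !ffunE aBD //.
  + move=> x; apply/ffunP => i; rewrite ffunE /w invg1 mul1g idxT mulg1 mulVg aB1 //.
  + move=> g h x _ _; apply/ffunP => i; rewrite !ffunE.
    set j := idx (g^-1 * T i)%g.
    have e : idx ((g * h)^-1 * T i)%g = idx (h^-1 * T j)%g.
      apply/esym/P2; have := mysgM hG0 (P1 (h^-1 * T j)%g) (P1 (g^-1 * T i)%g).
      by rewrite invgM !mulgA mulgK.
    rewrite e -aBM ?wG //; congr (actB _ _).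
    by rewrite /w e -/j !mulgA mulgK.
exists (fun phi : {ffun J -> B} => \sum_i actA (T i) (f (phi i))); split.
- move=> x y; rewrite -big_split /=; apply: eq_bigr => i _.
  by rewrite ffunE fD aAD.
- move=> y.
  set i0 := idx 1%g.
  have hi0 := P1 1%g; rewrite mulg1 in hi0.
  have [b fb] := fS (actA ((T i0)^-1)%g y).
  exists [ffun i => if i == i0 then b else 0].
  rewrite (bigD1 i0) //= ffunE eqxx fb -aAM // mulgV aA1 big1 ?addr0 //.
  move=> i /negbTE hi; rewrite ffunE hi.
  rewrite (add_0 fD); exact: (add_0 (fun u v => aAD (T i) u v isT)).
- move=> g x _.
  have hinj : injective (fun i => idx (g^-1 * T i)%g).
    move=> i1 i2 /= e; rewrite -(idxT i2); apply: P2.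
    have := mysgM hG0 (mysgV hG0 (P1 (g^-1 * T i1)%g)) (P1 (g^-1 * T i2)%g).
    by rewrite e !invgM invgK !mulgA mulgVK mulgK.
  rewrite (add_sum (fun u v => aAD g u v isT)) [RHS](reindex_inj hinj) /=.
  apply: eq_bigr => i _; rewrite ffunE fE ?wG // -!aAM //.
  by rewrite /w !mulgA mulgV mul1g.
Qed.
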